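(* Let $f$ satisfy the standing assumptions below, and for $\xi,u_1\in(0,1)$ let $$F_0(\xi,u_1)=\frac{1}{2\sqrt2}\int_{-1}^{1}\frac{f'\!\left(\frac{1+\mu}{2}\xi+\frac{1-\mu}{2}u_1\right)}{\sqrt{1-\mu}}\,d\mu,\qquad U_0(\xi,u_1)=\frac43\xi+\frac23u_1 .$$ Then, for $u_1$ sufficiently close to $1$, the function $\xi\mapsto -F_0(\xi,u_1)/U_0(\xi,u_1)$ on $(0,1)$ (whose minimum over $0<\xi<1$ is considered) has one and only one critical point in $(0,1)$. Furthermore, this critical point tends to $1/4$ as $u_1\to1$.
   Context: Standing assumptions: $f:(0,1)\to\mathbb{R}$ is the inverse of a smooth strictly decreasing function $u_0:\mathbb{R}\to(0,1)$ with $u_0(-\infty)=1$, $u_0(+\infty)=0$; thus $f$ is smooth with $f'<0$, $\lim_{u\to0}f(u)=+\infty$, $\lim_{u\to1}f(u)=-\infty$; moreover $f'''(u)<0$ for $u$ in a neighborhood of $0$ and in a neighborhood of $1$. *)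

(* Defs.v *)
From Stdlib Require Import Reals.
From Coquelicot Require Import Coquelicot.
Open Scope R_scope.

Definition standing_assumptions (f : R -> R) : Prop :=
  (forall (n : nat) (u : R), 0 < u < 1 -> ex_derive_n f n u) /\
  (forall u, 0 < u < 1 -> Derive f u < 0) /\
  filterlim f (at_right 0) (Rbar_locally p_infty) /\
  filterlim f (at_left 1) (Rbar_locally m_infty) /\
  (exists a, 0 < a /\
     (forall u, 0 < u < a -> Derive_n f 3 u < 0) /\
     (forall u, 1 - a < u < 1 -> Derive_n f 3 u < 0)).

(* F_0(xi,u1) = 1/(2 sqrt 2) * int_{-1}^{1} f'((1+mu)/2 xi + (1-mu)/2 u1)/sqrt(1-mu) dmu,
   an improper Riemann integral (integrable singularity at mu = 1). *)
Definition F0 (f : R -> R) (xi u1 : R) : R :=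
  / (2 * sqrt 2) *
  RInt_gen (fun mu => Derive f ((1 + mu) / 2 * xi + (1 - mu) / 2 * u1) / sqrt (1 - mu))
           (at_point (-1)) (at_left 1).

Definition U0 (xi u1 : R) : R := 4 / 3 * xi + 2 / 3 * u1.

Definition G0 (f : R -> R) (u1 : R) (xi : R) : R := - F0 f xi u1 / U0 xi u1.

Definition critical_point (f : R -> R) (u1 xi : R) : Prop :=
  0 < xi < 1 /\ is_derive (G0 f u1) xi 0.

(* Main.v *)
Require Import Defs.
From Stdlib Require Import Reals Lra Psatz Classical.
From Coquelicot Require Import Coquelicot.
Open Scope R_scope.

Section S.
Variable f : R -> R.
Hypothesis Hder : forall (n : nat) (u : R), 0 < u < 1 -> ex_derive_n f n u.

Definition dv1 x := Derive f x.
Definition dv2 x := Derive_n f 2 x.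
Definition dv3 x := Derive_n f 3 x.

Lemma dd0 x : 0 < x < 1 -> is_derive f x (dv1 x).
Proof. intros H. apply Derive_correct. exact (Hder 1 x H). Qed.
Lemma dd1 x : 0 < x < 1 -> is_derive dv1 x (dv2 x).
Proof. intros H. apply Derive_correct. exact (Hder 2 x H). Qed.
Lemma dd2 x : 0 < x < 1 -> is_derive dv2 x (dv3 x).
Proof. intros H. apply Derive_correct. exact (Hder 3 x H). Qed.
Lemma cd3 x : 0 < x < 1 -> continuous dv3 x.
Proof. intros H. apply (ex_derive_continuous (K:=R_AbsRing) (V:=R_NormedModule)). exact (Hder 4 x H). Qed.
Lemma cd2 x : 0 < x < 1 -> continuous dv2 x.
Proof. intros H. apply (ex_derive_continuous (K:=R_AbsRing) (V:=R_NormedModule)). eexists; apply dd2; auto. Qed.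
Lemma cd1 x : 0 < x < 1 -> continuous dv1 x.
Proof. intros H. apply (ex_derive_continuous (K:=R_AbsRing) (V:=R_NormedModule)). eexists; apply dd1; auto. Qed.
Lemma cd0 x : 0 < x < 1 -> continuous f x.
Proof. intros H. apply (ex_derive_continuous (K:=R_AbsRing) (V:=R_NormedModule)). eexists; apply dd0; auto. Qed.

Lemma is_derive_eq (g : R -> R) x l l' : is_derive g x l -> l = l' -> is_derive g x l'.
Proof. intros H ->; exact H. Qed.

Lemma scalR (a b : R) : scal a b = a * b.
Proof. reflexivity. Qed.

Definition X (xi u1 s : R) := xi + s * s * (u1 - xi).

Lemma X_in xi u1 s : 0 < xi < 1 -> 0 < u1 < 1 -> 0 <= s <= 1 -> 0 < X xi u1 s < 1.
Proof.
  intros H1 H2 H3. unfold X. assert (Hw : 0 <= s * s <= 1) by nra.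
  revert Hw. generalize (s * s). intros w Hw.
  assert (0 <= (1 - w) * xi) by (apply Rmult_le_pos; lra).
  assert (0 <= w * u1) by (apply Rmult_le_pos; lra).
  assert (0 <= (1 - w) * (1 - xi)) by (apply Rmult_le_pos; lra).
  assert (0 <= w * (1 - u1)) by (apply Rmult_le_pos; lra).
  destruct (Rle_lt_dec w (1/2)).
  - assert (0 < (1 - w) * xi) by (apply Rmult_lt_0_compat; lra).
    assert (0 < (1 - w) * (1 - xi)) by (apply Rmult_lt_0_compat; lra). nra.
  - assert (0 < w * u1) by (apply Rmult_lt_0_compat; lra).
    assert (0 < w * (1 - u1)) by (apply Rmult_lt_0_compat; lra). nra.
Qed.

Lemma X_cont2d u1 x y : continuity_2d_pt (fun u v => X u u1 v) x y.
Proof.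
  unfold X. apply continuity_2d_pt_plus. apply continuity_2d_pt_id1.
  apply continuity_2d_pt_mult. apply continuity_2d_pt_mult; apply continuity_2d_pt_id2.
  apply continuity_2d_pt_minus. apply continuity_2d_pt_const. apply continuity_2d_pt_id1.
Qed.

Lemma loc2d_in (g : R -> R -> R) x y : continuity_2d_pt g x y -> 0 < g x y < 1 ->
  locally_2d (fun u v => 0 < g u v < 1) x y.
Proof.
  intros Hc Hin.
  assert (He : 0 < Rmin (g x y) (1 - g x y)) by (apply Rmin_pos; lra).
  specialize (Hc (mkposreal _ He)).
  eapply locally_2d_impl; [|exact Hc].
  apply locally_2d_forall. intros u v Hu. simpl in Hu.
  pose proof (Rmin_l (g x y) (1 - g x y)). pose proof (Rmin_r (g x y) (1 - g x y)).
  apply Rabs_def2 in Hu. lra.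
Qed.


Lemma X_der_u u1 s y : is_derive (fun u => X u u1 s) y (1 - s * s).
Proof. unfold X. auto_derive. auto. ring. Qed.

Lemma X_der_s xi u1 s : is_derive (fun s => X xi u1 s) s (2 * s * (u1 - xi)).
Proof. unfold X. auto_derive. auto. ring. Qed.

Lemma X_cont_s xi u1 s : continuous (fun s => X xi u1 s) s.
Proof.
  apply (ex_derive_continuous (K:=R_AbsRing) (V:=R_NormedModule)).
  eexists. apply X_der_s.
Qed.

Lemma param (h dh m : R -> R) u1 xi :
  (forall x, 0 < x < 1 -> is_derive h x (dh x)) ->
  (forall x, 0 < x < 1 -> continuous dh x) ->
  (forall s, continuous m s) ->
  0 < xi < 1 -> 0 < u1 < 1 ->
  is_derive (fun u => RInt (fun s => h (X u u1 s) * m s) 0 1) xi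
    (RInt (fun s => dh (X xi u1 s) * (1 - s * s) * m s) 0 1).
Proof.
  intros Hh Hdh Hm Hxi Hu1.
  assert (Hch : forall x, 0 < x < 1 -> continuous h x).
  { intros x Hx. apply (ex_derive_continuous (K:=R_AbsRing) (V:=R_NormedModule)).
    eexists; apply Hh; auto. }
  assert (Hd : forall y t, 0 < X y u1 t < 1 ->
     is_derive (fun u => h (X u u1 t) * m t) y (dh (X y u1 t) * (1 - t * t) * m t)).
  { intros y t Hy.
    assert (H1 : is_derive (fun u => h (X u u1 t)) y (scal (1 - t*t) (dh (X y u1 t)))).
    { apply (is_derive_comp h (fun u => X u u1 t)). apply Hh; auto. apply X_der_u. }
    pose proof (is_derive_scal_l (V := R_NormedModule) _ _ _ (m t) H1) as H2.
    eapply is_derive_eq; [exact H2|]. simpl. change (((1 - t * t) * dh (X y u1 t)) * m t = dh (X y u1 t) * (1 - t * t) * m t). ring.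
  }
  assert (Hr : 0 < Rmin xi (1 - xi)) by (apply Rmin_pos; lra).
  assert (Hball : forall y, Rabs (y - xi) < Rmin xi (1 - xi) -> 0 < y < 1).
  { intros y Hy. apply Rabs_def2 in Hy. pose proof (Rmin_l xi (1-xi)). pose proof (Rmin_r xi (1-xi)). lra. }
  assert (Hct : forall y t, 0 < y < 1 -> 0 <= t <= 1 -> continuous (fun t => h (X y u1 t) * m t) t).
  { intros y t Hy Ht. apply (continuous_mult (K := R_AbsRing) (fun t => h (X y u1 t)) m).
    apply (continuous_comp (fun t => X y u1 t) h). apply X_cont_s. apply Hch. apply X_in; auto.
    apply Hm. }
  assert (HD : is_derive (fun u => RInt (fun s => h (X u u1 s) * m s) 0 1) xi
    (RInt (fun t => Derive (fun u => h (X u u1 t) * m t) xi) 0 1)).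
  { apply (is_derive_RInt_param (fun u s => h (X u u1 s) * m s)).
    - exists (mkposreal _ Hr). intros y Hy t Ht. rewrite Rmin_left in Ht by lra. rewrite Rmax_right in Ht by lra.
      assert (0 < y < 1) by (apply Hball; exact Hy).
      eexists. apply Hd. apply X_in; auto.
    - intros t Ht. rewrite Rmin_left in Ht by lra. rewrite Rmax_right in Ht by lra.
      apply continuity_2d_pt_ext_loc with (f := fun u v => dh (X u u1 v) * (1 - v*v) * m v).
      + eapply locally_2d_impl; [|apply (loc2d_in (fun u v => X u u1 v)); [apply X_cont2d| apply X_in; auto]].
        apply locally_2d_forall. intros u v Huv. symmetry. apply is_derive_unique. apply Hd. auto.
      + apply continuity_2d_pt_mult. apply continuity_2d_pt_mult.
        * apply (continuity_1d_2d_pt_comp dh (fun u v => X u u1 v)).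
          apply continuity_pt_filterlim. apply Hdh. apply X_in; auto. apply X_cont2d.
        * apply continuity_2d_pt_minus. apply continuity_2d_pt_const.
          apply continuity_2d_pt_mult; apply continuity_2d_pt_id2.
        * apply (continuity_1d_2d_pt_comp m (fun u v => v)).
          apply continuity_pt_filterlim. apply Hm. apply continuity_2d_pt_id2.
    - exists (mkposreal _ Hr). intros y Hy. apply (ex_RInt_continuous (V := R_CompleteNormedModule)).
      intros z Hz. rewrite Rmin_left in Hz by lra. rewrite Rmax_right in Hz by lra.
      assert (0 < y < 1) by (apply Hball; exact Hy).
      apply Hct; auto. }
  eapply is_derive_eq; [exact HD|].
  apply RInt_ext. intros t Ht. rewrite Rmin_left in Ht by lra. rewrite Rmax_right in Ht by lra.
  apply is_derive_unique. apply Hd. apply X_in; auto; lra.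
Qed.
End S.

Section C.
Variable f : R -> R.
Hypothesis Hder : forall (n : nat) (u : R), 0 < u < 1 -> ex_derive_n f n u.

Definition FF u1 xi := RInt (fun s => dv1 f (X xi u1 s)) 0 1.
Definition F1 u1 xi := RInt (fun s => dv2 f (X xi u1 s) * (1 - s * s)) 0 1.
Definition F2 u1 xi := RInt (fun s => dv3 f (X xi u1 s) * ((1 - s * s) * (1 - s * s))) 0 1.

Lemma cont_1mss s : continuous (fun s => 1 - s * s) s.
Proof.
  apply (ex_derive_continuous (K:=R_AbsRing) (V:=R_NormedModule)).
  eexists. apply (is_derive_minus (fun _ : R => 1) (fun s => s * s)).
  apply is_derive_const. apply (is_derive_mult (K := R_AbsRing) (fun s => s) (fun s => s)).
  apply is_derive_id. apply is_derive_id. intros; apply Rmult_comm.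
Qed.

Lemma FF_der u1 xi : 0 < xi < 1 -> 0 < u1 < 1 -> is_derive (FF u1) xi (F1 u1 xi).
Proof.
  intros H1 H2.
  pose proof (param (dv1 f) (dv2 f) (fun _ => 1) u1 xi (dd1 f Hder) (cd2 f Hder)
     (fun s => continuous_const 1 s) H1 H2) as H.
  eapply is_derive_ext; [|eapply is_derive_eq; [exact H|]].
  - intros t. unfold FF. apply RInt_ext. intros; match goal with |- ?a = ?b => change (@eq R a b) end; ring.
  - unfold F1. apply RInt_ext. intros; match goal with |- ?a = ?b => change (@eq R a b) end; ring.
Qed.

Lemma F1_der u1 xi : 0 < xi < 1 -> 0 < u1 < 1 -> is_derive (F1 u1) xi (F2 u1 xi).
Proof.
  intros H1 H2.
  pose proof (param (dv2 f) (dv3 f) (fun s => 1 - s * s) u1 xi (dd2 f Hder) (cd3 f Hder)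
     cont_1mss H1 H2) as H.
  eapply is_derive_ext; [|eapply is_derive_eq; [exact H|]].
  - intros t. reflexivity.
  - unfold F2. apply RInt_ext. intros; match goal with |- ?a = ?b => change (@eq R a b) end; ring.
Qed.
End C.

Ltac scalr := repeat match goal with |- context [scal ?a ?b] => change (scal a b) with (a * b) end.
Ltac reqR := match goal with |- ?a = ?b => change (@eq R a b) end.

Section D.
Variable f : R -> R.
Hypothesis Hder : forall (n : nat) (u : R), 0 < u < 1 -> ex_derive_n f n u.

Lemma X_in_w xi u1 w : 0 < xi < 1 -> 0 < u1 < 1 ->
  0 <= w <= 1 + Rmin u1 (1 - u1) / 2 -> 0 < xi + w * (u1 - xi) < 1.
Proof.
  intros H1 H2 Hw.
  destruct (Rle_lt_dec w 1) as [Hle|Hgt].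
  - pose proof (X_in xi u1 (sqrt w) H1 H2) as H.
    unfold X in H. rewrite sqrt_sqrt in H by lra. apply H.
    split. apply sqrt_pos. rewrite <- sqrt_1. apply sqrt_le_1_alt. lra.
  - pose proof (Rmin_l u1 (1 - u1)). pose proof (Rmin_r u1 (1 - u1)).
    assert (0 <= (w - 1) * (1 - (u1 - xi))) by (apply Rmult_le_pos; lra).
    assert (0 <= (w - 1) * (1 + (u1 - xi))) by (apply Rmult_le_pos; lra).
    split; nra.
Qed.

Lemma X_in_ext xi u1 t : 0 < xi < 1 -> 0 < u1 < 1 ->
  t * t <= 1 + Rmin u1 (1 - u1) / 2 -> 0 < X xi u1 t < 1.
Proof.
  intros H1 H2 Ht. unfold X. apply X_in_w; auto. split; auto. nra.
Qed.

Section F0s.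
Variables xi u1 : R.
Hypothesis Hxi : 0 < xi < 1.
Hypothesis Hu1 : 0 < u1 < 1.
Let e := Rmin u1 (1 - u1) / 2.
Let Rr := sqrt (1 + e).
Let k s := dv1 f (X xi u1 s).
Let A b := RInt k 0 b.

Lemma e_pos : 0 < e.
Proof. unfold e. assert (0 < Rmin u1 (1 - u1)) by (apply Rmin_pos; lra). lra. Qed.

Lemma in_Rr t : Rabs t < Rr -> 0 < X xi u1 t < 1.
Proof.
  intros Ht. apply X_in_ext; auto. fold e.
  pose proof e_pos. pose proof (Rabs_pos t).
  assert (Rabs t * Rabs t <= Rr * Rr) by nra.
  unfold Rr in H1. rewrite sqrt_sqrt in H1 by lra. rewrite <- Rabs_mult in H1.
  rewrite Rabs_right in H1 by nra. lra.
Qed.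

Lemma k_cont t : Rabs t < Rr -> continuous k t.
Proof.
  intros Ht. unfold k. apply (continuous_comp (fun s => X xi u1 s) (dv1 f)).
  apply X_cont_s. apply (cd1 f Hder). apply in_Rr; auto.
Qed.

Lemma A_der t : Rabs t < Rr -> is_derive A t (k t).
Proof.
  intros Ht. apply (is_derive_RInt k A 0 t).
  - assert (Hp : 0 < Rr - Rabs t) by lra.
    exists (mkposreal _ Hp). intros b Hb. simpl in Hb.
    change (Rabs (b - t) < Rr - Rabs t) in Hb.
    apply (RInt_correct (V := R_CompleteNormedModule)).
    apply (ex_RInt_continuous (V := R_CompleteNormedModule)).
    intros z Hz. apply k_cont.
    assert (Rabs b < Rr).
    { pose proof (Rabs_triang_inv b t). pose proof (Rabs_triang (b - t) t).
      replace (b - t + t) with b in H0 by lra. lra. }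
    assert (Rabs z <= Rabs b).
    { unfold Rmin, Rmax in Hz. destruct (Rle_dec 0 b).
      rewrite !Rabs_right by lra. lra.
      rewrite !Rabs_left1 by lra. lra. }
    lra.
  - apply k_cont; auto.
Qed.

Let sg mu := sqrt ((1 - mu) / 2).
Let Phi mu := - (2 * sqrt 2) * A (sg mu).
Let phi mu := Derive f ((1 + mu) / 2 * xi + (1 - mu) / 2 * u1) / sqrt (1 - mu).

Lemma sg_der mu : mu < 1 -> is_derive sg mu (- / (4 * sg mu)).
Proof.
  intros Hmu. unfold sg. auto_derive. lra.
  change ((1 + - mu) * / 2) with ((1 - mu) / 2). reqR.
  assert (0 < sqrt ((1 - mu) / 2)) by (apply sqrt_lt_R0; lra). field. lra.
Qed.

Lemma sg_dom mu : -1 - 2 * e < mu < 1 -> 0 < sg mu /\ Rabs (sg mu) < Rr.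
Proof.
  intros Hmu. assert (0 < sg mu) by (apply sqrt_lt_R0; lra).
  split; auto. rewrite Rabs_right by lra. apply sqrt_lt_1_alt. lra.
Qed.

Lemma Phi_der mu : -1 - 2 * e < mu < 1 -> is_derive Phi mu (phi mu).
Proof.
  intros Hmu. destruct (sg_dom mu Hmu) as [Hs HR].
  assert (H := is_derive_comp A sg mu _ _ (A_der _ HR) (sg_der mu (proj2 Hmu))).
  apply (is_derive_scal _ _ (- (2 * sqrt 2))) in H.
  eapply is_derive_eq; [exact H|]. scalr. reqR.
  unfold phi, k. unfold X.
  assert (Hsq : sg mu * sg mu = (1 - mu) / 2) by (apply sqrt_sqrt; lra).
  rewrite Hsq.
  replace (xi + (1 - mu) / 2 * (u1 - xi)) with ((1 + mu) / 2 * xi + (1 - mu) / 2 * u1) by field.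
  unfold dv1.
  assert (H2 : sqrt (1 - mu) = sqrt 2 * sg mu).
  { unfold sg. rewrite <- sqrt_mult_alt by lra. f_equal. field. }
  rewrite H2. assert (H3 : sqrt 2 * sqrt 2 = 2) by (apply sqrt_sqrt; lra).
  assert (0 < sqrt 2) by (apply sqrt_lt_R0; lra).
  field_simplify; [|lra|lra].
  assert (E : 4 * sg mu = 2 * sqrt 2 * (sqrt 2 * sg mu)).
  { replace (2 * sqrt 2 * (sqrt 2 * sg mu)) with (2 * (sqrt 2 * sqrt 2) * sg mu) by ring.
    rewrite H3. ring. }
  rewrite E. field. lra.
Qed.

Lemma L_in mu : -1 - 2 * e < mu < 1 -> 0 < (1 + mu) / 2 * xi + (1 - mu) / 2 * u1 < 1.
Proof.
  intros Hmu. replace ((1 + mu) / 2 * xi + (1 - mu) / 2 * u1) with (xi + (1 - mu) / 2 * (u1 - xi)) by field.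
  apply X_in_w; auto. fold e. lra.
Qed.

Lemma lin_der a b x : is_derive (fun m : R => a + b * m) x b.
Proof. auto_derive; auto. ring. Qed.

Lemma lin_cont a b x : continuous (fun m => a + b * m) x.
Proof.
  apply (ex_derive_continuous (K:=R_AbsRing) (V:=R_NormedModule)).
  exists b. apply lin_der.
Qed.

Lemma phi_cont x : -1 - 2 * e < x < 1 -> continuous phi x.
Proof.
  intros Hx. unfold phi.
  apply (continuous_mult (K := R_AbsRing) (fun mu => Derive f ((1 + mu) / 2 * xi + (1 - mu) / 2 * u1))
     (fun mu => / sqrt (1 - mu))).
  - apply (continuous_comp (fun mu => (1 + mu) / 2 * xi + (1 - mu) / 2 * u1) (Derive f)).
    + eapply continuous_ext; [|apply (lin_cont ((xi + u1) / 2) ((xi - u1) / 2))].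
      intros m. simpl. field.
    + apply (cd1 f Hder). apply L_in; auto.
  - apply continuous_Rinv_comp.
    + apply continuous_sqrt_comp.
      eapply continuous_ext; [|apply (lin_cont 1 (-1))]. intros m. simpl. ring.
    + assert (0 < sqrt (1 - x)) by (apply sqrt_lt_R0; lra). lra.
Qed.

Lemma Phi_cont1 : continuous Phi 1.
Proof.
  unfold Phi.
  apply (continuous_mult (K := R_AbsRing) (fun _ => - (2 * sqrt 2)) (fun mu => A (sg mu))).
  apply continuous_const.
  apply (continuous_comp sg A).
  - unfold sg. apply continuous_sqrt_comp.
    eapply continuous_ext; [|apply (lin_cont (1/2) (-1/2))]. intros m. simpl. field.
  - apply (ex_derive_continuous (K:=R_AbsRing) (V:=R_NormedModule)).
    eexists. apply A_der. unfold sg. replace ((1 - 1) / 2) with 0 by field.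
    rewrite sqrt_0, Rabs_R0. unfold Rr. rewrite <- sqrt_0. apply sqrt_lt_1_alt. pose proof e_pos. lra.
Qed.

Lemma F0_FF : F0 f xi u1 = FF f u1 xi.
Proof.
  pose proof e_pos as He.
  assert (HFP : forall P : R * R -> Prop, (forall b, -1 < b < 1 -> P (-1, b)) ->
     filter_prod (at_point (-1)) (at_left 1) P).
  { intros P HP. apply Filter_prod with (Q := fun a => a = -1) (R := fun b => -1 < b < 1).
    - reflexivity.
    - assert (H2 : 0 < 2) by lra. exists (mkposreal 2 H2). intros y Hy Hlt.
      change (Rabs (y - 1) < 2) in Hy. apply Rabs_def2 in Hy. lra.
    - intros a b -> Hb. apply HP; auto. }
  assert (HG : is_RInt_gen phi (at_point (-1)) (at_left 1) (Phi 1 - Phi (-1))).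
  { apply is_RInt_gen_ext with (f := Derive Phi).
    - apply HFP. intros b Hb x Hx. simpl in Hx.
      rewrite Rmin_left in Hx by lra. rewrite Rmax_right in Hx by lra.
      apply is_derive_unique. apply Phi_der. lra.
    - apply (is_RInt_gen_Derive Phi (Phi (-1)) (Phi 1)).
      + apply HFP. intros b Hb x Hx. simpl in Hx.
        rewrite Rmin_left in Hx by lra. rewrite Rmax_right in Hx by lra.
        eexists. apply Phi_der. lra.
      + apply HFP. intros b Hb x Hx. simpl in Hx.
        rewrite Rmin_left in Hx by lra. rewrite Rmax_right in Hx by lra.
        apply continuous_ext_loc with (g := phi).
        * assert (Hp : 0 < Rmin (x + 1 + 2 * e) (1 - x)) by (apply Rmin_pos; lra).
          exists (mkposreal _ Hp). intros y Hy. change (Rabs (y - x) < Rmin (x + 1 + 2 * e) (1 - x)) in Hy.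
          apply Rabs_def2 in Hy. pose proof (Rmin_l (x + 1 + 2 * e) (1 - x)).
          pose proof (Rmin_r (x + 1 + 2 * e) (1 - x)).
          symmetry. apply is_derive_unique. apply Phi_der. lra.
        * apply phi_cont. lra.
      + intros P HP. exact (locally_singleton _ _ HP).
      + eapply filterlim_filter_le_1. apply filter_le_within. apply Phi_cont1. }
  unfold F0. fold phi.
  rewrite (is_RInt_gen_unique _ _ HG).
  unfold Phi, sg. replace ((1 - 1) / 2) with 0 by field. replace ((1 - -1) / 2) with 1 by field.
  rewrite sqrt_0, sqrt_1. unfold A. rewrite RInt_point. unfold FF.
  change (RInt k 0 1) with (RInt (fun s => dv1 f (X xi u1 s)) 0 1).
  assert (0 < sqrt 2) by (apply sqrt_lt_R0; lra).
  change (zero : R) with 0. reqR. field. lra.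
Qed.
End F0s.
End D.

Section E.
Variable f : R -> R.
Hypothesis Hder : forall (n : nat) (u : R), 0 < u < 1 -> ex_derive_n f n u.

Definition phi u1 xi := F1 f u1 xi * U0 xi u1 - 4 / 3 * FF f u1 xi.

Lemma U0_der u1 x : is_derive (fun xi => U0 xi u1) x (4 / 3).
Proof. unfold U0. auto_derive; auto. ring. Qed.

Lemma U0_pos xi u1 : 0 < xi < 1 -> 0 < u1 < 1 -> 0 < U0 xi u1.
Proof. unfold U0. lra. Qed.

Lemma loc01 xi (P : R -> Prop) : 0 < xi < 1 -> (forall y, 0 < y < 1 -> P y) -> locally xi P.
Proof.
  intros Hxi HP. assert (Hr : 0 < Rmin xi (1 - xi)) by (apply Rmin_pos; lra).
  exists (mkposreal _ Hr). intros y Hy. change (Rabs (y - xi) < Rmin xi (1 - xi)) in Hy.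
  apply Rabs_def2 in Hy. pose proof (Rmin_l xi (1-xi)). pose proof (Rmin_r xi (1-xi)).
  apply HP. lra.
Qed.

Lemma G0_der u1 xi : 0 < xi < 1 -> 0 < u1 < 1 ->
  is_derive (G0 f u1) xi (- phi u1 xi / (U0 xi u1) ^ 2).
Proof.
  intros Hxi Hu1.
  assert (H := is_derive_div (fun x => - FF f u1 x) (fun x => U0 x u1) xi _ _
     (is_derive_opp _ _ _ (FF_der f Hder u1 xi Hxi Hu1)) (U0_der u1 xi)).
  eapply is_derive_ext_loc; [|eapply is_derive_eq; [apply H|]].
  - apply loc01; auto. intros y Hy. unfold G0. rewrite F0_FF; auto.
  - pose proof (U0_pos xi u1 Hxi Hu1). lra.
  - unfold phi. change (opp (F1 f u1 xi)) with (- F1 f u1 xi).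
    pose proof (U0_pos xi u1 Hxi Hu1). reqR. field. lra.
Qed.

Lemma crit_iff u1 xi : 0 < u1 < 1 ->
  (critical_point f u1 xi <-> 0 < xi < 1 /\ phi u1 xi = 0).
Proof.
  intros Hu1. split.
  - intros [Hxi HD]. split; auto.
    pose proof (is_derive_unique _ _ _ HD) as E1.
    pose proof (is_derive_unique _ _ _ (G0_der u1 xi Hxi Hu1)) as E2.
    rewrite E1 in E2. pose proof (U0_pos xi u1 Hxi Hu1).
    assert (0 < U0 xi u1 ^ 2) by (apply pow_lt; lra).
    apply (f_equal (fun z => z * (U0 xi u1 ^ 2))) in E2.
    field_simplify in E2; lra.
  - intros [Hxi Hp]. split; auto. eapply is_derive_eq; [apply G0_der; auto|].
    rewrite Hp. pose proof (U0_pos xi u1 Hxi Hu1). reqR. field. lra.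
Qed.

Lemma phi_der u1 xi : 0 < xi < 1 -> 0 < u1 < 1 ->
  is_derive (phi u1) xi (F2 f u1 xi * U0 xi u1).
Proof.
  intros Hxi Hu1. unfold phi.
  assert (H1 := is_derive_mult (K := R_AbsRing) (F1 f u1) (fun x => U0 x u1) xi _ _
      (F1_der f Hder u1 xi Hxi Hu1) (U0_der u1 xi) Rmult_comm).
  assert (H2 := is_derive_scal _ _ (4/3) _ (FF_der f Hder u1 xi Hxi Hu1)).
  assert (H3 := is_derive_minus _ _ _ _ _ H1 H2).
  eapply is_derive_eq; [exact H3|].
  change (F2 f u1 xi * U0 xi u1 + F1 f u1 xi * (4/3) - 4/3 * F1 f u1 xi = F2 f u1 xi * U0 xi u1).
  ring.
Qed.
End E.

Lemma mvt_aux (h dh : R -> R) p q : p < q ->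
  (forall x, p <= x <= q -> is_derive h x (dh x)) ->
  exists c, p <= c <= q /\ h q - h p = dh c * (q - p).
Proof.
  intros Hpq Hd.
  destruct (MVT_gen h p q dh) as [c [Hc E]].
  - intros x Hx. rewrite Rmin_left, Rmax_right in Hx by lra. apply Hd; lra.
  - intros x Hx. rewrite Rmin_left, Rmax_right in Hx by lra.
    apply continuity_pt_filterlim. apply (ex_derive_continuous (K:=R_AbsRing) (V:=R_NormedModule)).
    eexists; apply Hd; lra.
  - rewrite Rmin_left, Rmax_right in Hc by lra. exists c; auto.
Qed.

Lemma mono_le (h dh : R -> R) p q : p <= q ->
  (forall x, p <= x <= q -> is_derive h x (dh x)) ->
  (forall x, p <= x <= q -> dh x <= 0) -> h q <= h p.
Proof.
  intros Hpq Hd Hs. destruct (Req_dec p q). subst; lra.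
  destruct (mvt_aux h dh p q) as [c [Hc E]]; auto. lra.
  specialize (Hs c Hc). nra.
Qed.

Lemma mono_lt (h dh : R -> R) p q : p < q ->
  (forall x, p <= x <= q -> is_derive h x (dh x)) ->
  (forall x, p <= x <= q -> dh x < 0) -> h q < h p.
Proof.
  intros Hpq Hd Hs.
  destruct (mvt_aux h dh p q) as [c [Hc E]]; auto.
  specialize (Hs c Hc). nra.
Qed.

Section G.
Variable f : R -> R.
Hypothesis Hder : forall (n : nat) (u : R), 0 < u < 1 -> ex_derive_n f n u.

Lemma cXc (h : R -> R) xi u1 s : (forall x, 0 < x < 1 -> continuous h x) ->
  0 < xi < 1 -> 0 < u1 < 1 -> 0 <= s <= 1 -> continuous (fun s => h (X xi u1 s)) s.
Proof.
  intros Hh H1 H2 Hs. apply (continuous_comp (fun s => X xi u1 s) h). apply X_cont_s.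
  apply Hh. apply X_in; auto.
Qed.

Lemma exR (h m : R -> R) xi u1 p q : (forall x, 0 < x < 1 -> continuous h x) ->
  (forall s, continuous m s) -> 0 < xi < 1 -> 0 < u1 < 1 -> 0 <= p <= q -> q <= 1 ->
  ex_RInt (fun s => h (X xi u1 s) * m s) p q.
Proof.
  intros Hh Hm H1 H2 Hp Hq. apply (ex_RInt_continuous (V := R_CompleteNormedModule)).
  intros z Hz. rewrite Rmin_left, Rmax_right in Hz by lra.
  apply (continuous_mult (K := R_AbsRing) (fun s => h (X xi u1 s)) m).
  apply cXc; auto; lra. apply Hm.
Qed.

Lemma exR1 (h : R -> R) xi u1 p q : (forall x, 0 < x < 1 -> continuous h x) ->
  0 < xi < 1 -> 0 < u1 < 1 -> 0 <= p <= q -> q <= 1 ->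
  ex_RInt (fun s => h (X xi u1 s)) p q.
Proof.
  intros Hh H1 H2 Hp Hq. apply (ex_RInt_continuous (V := R_CompleteNormedModule)).
  intros z Hz. rewrite Rmin_left, Rmax_right in Hz by lra.
  apply cXc; auto; lra.
Qed.

Lemma poly_cont (m : R -> R) s : (forall s, ex_derive m s) -> continuous m s.
Proof. intros H. apply (ex_derive_continuous (K:=R_AbsRing) (V:=R_NormedModule)). apply H. Qed.

Lemma ftc_X (H dH : R -> R) xi u1 p q :
  (forall x, 0 < x < 1 -> is_derive H x (dH x)) ->
  (forall x, 0 < x < 1 -> continuous dH x) ->
  0 < xi < 1 -> 0 < u1 < 1 -> 0 <= p <= q -> q <= 1 ->
  is_RInt (fun s => dH (X xi u1 s) * (2 * s * (u1 - xi))) p q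
    (H (X xi u1 q) - H (X xi u1 p)).
Proof.
  intros HD HC H1 H2 Hp Hq.
  apply (is_RInt_derive (V := R_CompleteNormedModule) (fun s => H (X xi u1 s))).
  - intros x Hx. rewrite Rmin_left, Rmax_right in Hx by lra.
    eapply is_derive_eq. apply (is_derive_comp H (fun s => X xi u1 s)).
    apply HD. apply X_in; auto; lra. apply X_der_s.
    scalr. reqR. ring.
  - intros x Hx. rewrite Rmin_left, Rmax_right in Hx by lra.
    apply (continuous_mult (K := R_AbsRing) (fun s => dH (X xi u1 s)) (fun s => 2 * s * (u1 - xi))).
    apply cXc; auto; lra. apply poly_cont. intros s. eexists.
    apply (is_derive_ext (fun s => 0 + (2 * (u1 - xi)) * s)). intros t; simpl; ring.
    apply lin_der.
Qed.

Lemma Q_der u1 x : 0 < x < 1 ->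
  is_derive (fun x => dv1 f x * (u1 - x) + f x) x (dv2 f x * (u1 - x)).
Proof.
  intros Hx.
  assert (Hl : is_derive (fun x => u1 - x) x (-1)).
  { apply (is_derive_ext (fun s => u1 + (-1) * s)). intros t; simpl; ring. apply lin_der. }
  assert (H1 := is_derive_mult (K := R_AbsRing) (dv1 f) (fun x => u1 - x) x _ _ (dd1 f Hder x Hx) Hl Rmult_comm).
  assert (H2 := is_derive_plus _ _ _ _ _ H1 (dd0 f Hder x Hx)).
  eapply is_derive_eq; [exact H2|].
  change (dv2 f x * (u1 - x) + dv1 f x * -1 + dv1 f x = dv2 f x * (u1 - x)). ring.
Qed.

Lemma P_der u1 x : 0 < x < 1 ->
  is_derive (fun x => dv2 f x * ((u1 - x) * (u1 - x)) + 2 * (dv1 f x * (u1 - x)) + 2 * f x) x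
    (dv3 f x * ((u1 - x) * (u1 - x))).
Proof.
  intros Hx.
  assert (Hl : is_derive (fun x => u1 - x) x (-1)).
  { apply (is_derive_ext (fun s => u1 + (-1) * s)). intros t; simpl; ring. apply lin_der. }
  assert (Hl2 := is_derive_mult (K := R_AbsRing) (fun x => u1 - x) (fun x => u1 - x) x _ _ Hl Hl Rmult_comm).
  assert (H1 := is_derive_mult (K := R_AbsRing) (dv2 f) _ x _ _ (dd2 f Hder x Hx) Hl2 Rmult_comm).
  assert (H2 := is_derive_mult (K := R_AbsRing) (dv1 f) (fun x => u1 - x) x _ _ (dd1 f Hder x Hx) Hl Rmult_comm).
  assert (H3 := is_derive_scal _ _ 2 _ H2).
  assert (H4 := is_derive_scal _ _ 2 _ (dd0 f Hder x Hx)).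
  assert (H5 := is_derive_plus _ _ _ _ _ (is_derive_plus _ _ _ _ _ H1 H3) H4).
  eapply is_derive_eq; [exact H5|].
  change (dv3 f x * ((u1 - x) * (u1 - x)) + dv2 f x * (-1 * (u1 - x) + (u1 - x) * -1)
    + 2 * (dv2 f x * (u1 - x) + dv1 f x * -1) + 2 * dv1 f x = dv3 f x * ((u1 - x) * (u1 - x))).
  ring.
Qed.
End G.

Section H.
Variable f : R -> R.
Hypothesis Hder : forall (n : nat) (u : R), 0 < u < 1 -> ex_derive_n f n u.
Hypothesis Hneg : forall u, 0 < u < 1 -> Derive f u < 0.
Hypothesis Hlim : filterlim f (at_left 1) (Rbar_locally m_infty).
Variable a : R.
Hypothesis Ha : 0 < a.
Hypothesis Ha0 : forall u, 0 < u < a -> Derive_n f 3 u < 0.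
Hypothesis Ha1 : forall u, 1 - a < u < 1 -> Derive_n f 3 u < 0.

Lemma lim_f M : exists d, 0 < d /\ forall x, 1 - d < x < 1 -> f x < M.
Proof.
  assert (HP : Rbar_locally m_infty (fun y => y < M)) by (exists M; auto).
  specialize (Hlim _ HP). destruct Hlim as [d Hd].
  exists d. split. apply cond_pos. intros x Hx. apply Hd. 2: lra.
  change (Rabs (x - 1) < d). rewrite Rabs_left by lra. lra.
Qed.

Lemma v_exists : exists v, 0 < v < 1 /\ 1 - a < v /\ forall x, v <= x < 1 -> dv2 f x < 0.
Proof.
  set (a' := Rmin a (1/2)).
  assert (Ha' : 0 < a' <= 1/2 /\ a' <= a).
  { unfold a'. split; [split|]. apply Rmin_pos; lra. apply Rmin_r. apply Rmin_l. }
  destruct (classic (exists w, 1 - a' < w < 1 /\ dv2 f w < 0)) as [[w [Hw1 Hw2]]|Hno].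
  - exists w. split; [lra|split; [lra|]]. intros x Hx.
    assert (dv2 f x <= dv2 f w); [|lra].
    apply (mono_le (dv2 f) (dv3 f)). lra.
    intros y Hy. apply (dd2 f Hder). lra.
    intros y Hy. apply Rlt_le. apply Ha1. lra.
  - exfalso.
    assert (Hge : forall w, 1 - a' < w < 1 -> 0 <= dv2 f w).
    { intros w Hw. destruct (Rle_lt_dec 0 (dv2 f w)); auto. exfalso. apply Hno. exists w. split; auto. }
    set (m := 1 - a' / 2).
    assert (Hm : 1 - a' < m < 1) by (unfold m; lra).
    assert (Hd1 : forall y, m <= y < 1 -> dv1 f m <= dv1 f y).
    { intros y Hy. assert (- dv1 f y <= - dv1 f m); [|lra].
      apply (mono_le (fun z => - dv1 f z) (fun z => - dv2 f z)). lra.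
      intros z Hz. apply (is_derive_opp (dv1 f)). apply (dd1 f Hder). lra.
      intros z Hz. assert (0 <= dv2 f z) by (apply Hge; lra). lra. }
    assert (Hf : forall x, m <= x < 1 -> f m + dv1 f m <= f x).
    { intros x Hx.
      assert (dv1 f m * x - f x <= dv1 f m * m - f m).
      { apply (mono_le (fun y => dv1 f m * y - f y) (fun y => dv1 f m - dv1 f y)). lra.
        intros y Hy. eapply is_derive_eq.
        apply (is_derive_minus (fun y => dv1 f m * y) f). 
        apply (is_derive_ext (fun y => 0 + dv1 f m * y)). intros t; simpl; ring. apply lin_der.
        apply (dd0 f Hder). lra. reflexivity.
        intros y Hy. pose proof (Hd1 y). lra. }
      assert (dv1 f m < 0) by (apply Hneg; lra). nra. }
    destruct (lim_f (f m + dv1 f m)) as [d [Hd HdP]].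
    set (x := Rmax m (1 - d / 2)).
    assert (Hx : m <= x < 1 /\ 1 - d < x).
    { unfold x, Rmax. destruct (Rle_dec m (1 - d / 2)); lra. }
    specialize (HdP x ltac:(lra)). specialize (Hf x ltac:(lra)). lra.
Qed.
End H.

Section L6.
Variable f : R -> R.
Hypothesis Hder : forall (n : nat) (u : R), 0 < u < 1 -> ex_derive_n f n u.
Hypothesis Hneg : forall u, 0 < u < 1 -> Derive f u < 0.
Hypothesis Hlim : filterlim f (at_left 1) (Rbar_locally m_infty).
Variable a : R.
Hypothesis Ha : 0 < a.
Hypothesis Ha0 : forall u, 0 < u < a -> Derive_n f 3 u < 0.
Hypothesis Ha1 : forall u, 1 - a < u < 1 -> Derive_n f 3 u < 0.

Lemma cont_w s : continuous (fun s => (1 - s * s) * (1 - s * s)) s.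
Proof.
  apply (continuous_mult (K := R_AbsRing) (fun s => 1 - s * s) (fun s => 1 - s * s)); apply cont_1mss.
Qed.

Lemma X_sq xi u1 s : u1 - X xi u1 s = (u1 - xi) * (1 - s * s).
Proof. unfold X. ring. Qed.

Lemma X_mono xi u1 s t : xi < u1 -> 0 <= s <= t -> X xi u1 s <= X xi u1 t.
Proof. intros H1 H2. unfold X. assert (s * s <= t * t) by nra. nra. Qed.

Lemma X_sc xi u1 c : xi < u1 -> xi <= c -> X xi u1 (sqrt ((c - xi) / (u1 - xi))) = c.
Proof.
  intros H1 H2. unfold X. rewrite sqrt_sqrt. field. lra.
  apply Rdiv_le_0_compat; lra.
Qed.

Lemma X_1 xi u1 : X xi u1 1 = u1.
Proof. unfold X. ring. Qed.

Lemma absb x t : 0 <= t <= 1 -> - Rabs x <= x * t.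
Proof.
  intros Ht. destruct (Rle_lt_dec 0 x).
  - rewrite Rabs_right by lra. nra.
  - rewrite Rabs_left by lra. nra.
Qed.

Lemma cont_lin1 u1 x : continuous (fun x => u1 - x) x.
Proof.
  eapply continuous_ext; [|apply (lin_cont u1 (-1))]. intros m. simpl. ring.
Qed.

Lemma cont_d3w u1 x : 0 < x < 1 -> continuous (fun x => dv3 f x * ((u1 - x) * (u1 - x))) x.
Proof.
  intros Hx. apply (continuous_mult (K := R_AbsRing) (dv3 f) (fun x => (u1 - x) * (u1 - x))).
  apply (cd3 f Hder); auto.
  apply (continuous_mult (K := R_AbsRing) (fun x => u1 - x) (fun x => u1 - x)); apply cont_lin1.
Qed.

Lemma L6 : exists d, 0 < d /\ forall u1, 1 - d < u1 < 1 -> forall xi, 0 < xi < 1 -> F2 f u1 xi < 0.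
Proof.
  set (a' := Rmin a (1/2)).
  assert (Ha' : 0 < a' <= 1/2 /\ a' <= a).
  { unfold a'. split; [split|]. apply Rmin_pos; lra. apply Rmin_r. apply Rmin_l. }
  set (c := 1 - a' / 2).
  assert (Hc : 3/4 <= c < 1 /\ 1 - a < c) by (unfold c; lra).
  destruct (continuity_ab_maj (dv3 f) a' c) as [Mx [HMx HMxi]]. lra.
  { intros z Hz. apply continuity_pt_filterlim. apply (cd3 f Hder). lra. }
  set (M0 := Rmax 0 (dv3 f Mx)).
  assert (HM0 : 0 <= M0) by apply Rmax_l.
  assert (HM : forall x, 0 < x <= c -> dv3 f x <= M0).
  { intros x Hx. destruct (Rlt_le_dec x a').
    - assert (dv3 f x < 0) by (apply Ha0; lra). lra.
    - specialize (HMx x ltac:(lra)). pose proof (Rmax_r 0 (dv3 f Mx)). fold M0 in H. lra. }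
  set (Pc := Rabs (dv2 f c) + 2 * Rabs (dv1 f c) + 2 * Rabs (f c)).
  destruct (lim_f f Hlim (- M0 - Pc / 2 - 1)) as [d0 [Hd0 Hd0P]].
  exists (Rmin d0 (1 - c)). split. apply Rmin_pos; lra.
  intros u1 Hu1 xi Hxi.
  pose proof (Rmin_l d0 (1 - c)). pose proof (Rmin_r d0 (1 - c)).
  assert (Hu1c : c < u1) by lra.
  assert (Hfu1 : f u1 < - M0 - Pc / 2 - 1) by (apply Hd0P; lra).
  assert (Hu1' : 0 < u1 < 1) by lra.
  set (g := fun s => dv3 f (X xi u1 s) * ((1 - s * s) * (1 - s * s))).
  destruct (Rle_lt_dec xi c) as [Hxc|Hxc].
  -
    set (lam := u1 - xi).
    assert (Hlam : 0 < lam < 1) by (unfold lam; lra).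
    set (sc := sqrt ((c - xi) / lam)).
    assert (Hsc : 0 <= sc <= 1).
    { split. apply sqrt_pos. unfold sc. rewrite <- sqrt_1. apply sqrt_le_1_alt.
      apply Rmult_le_reg_r with lam. lra. unfold Rdiv. rewrite Rmult_assoc, Rinv_l by lra. unfold lam. lra. }
    assert (HXsc : X xi u1 sc = c) by (apply X_sc; lra).
    assert (Hsplit : F2 f u1 xi = RInt g 0 sc + RInt g sc 1).
    { unfold F2. symmetry. apply (RInt_Chasles (V := R_CompleteNormedModule) g 0 sc 1).
      apply exR; [apply cd3; auto|apply cont_w|..]; lra.
      apply exR; [apply cd3; auto|apply cont_w|..]; lra. }
    assert (B1 : RInt g 0 sc <= M0).
    { apply Rle_trans with (RInt (fun _ => M0) 0 sc).
      - apply RInt_le. lra.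
        apply exR; [apply cd3; auto|apply cont_w|..]; lra.
        apply ex_RInt_const.
        intros s Hs. unfold g.
        assert (0 < X xi u1 s < 1) by (apply X_in; lra).
        assert (X xi u1 s <= c) by (rewrite <- HXsc; apply X_mono; lra).
        specialize (HM (X xi u1 s) ltac:(lra)).
        assert (0 <= 1 - s * s <= 1) by nra. assert (0 <= (1 - s * s) * (1 - s * s) <= 1) by (split; nra).
        destruct (Rle_lt_dec 0 (dv3 f (X xi u1 s))); nra.
      - rewrite RInt_const. change (scal (sc - 0) M0) with ((sc - 0) * M0). nra. }
    set (P := fun x => dv2 f x * ((u1 - x) * (u1 - x)) + 2 * (dv1 f x * (u1 - x)) + 2 * f x).
    assert (HI := ftc_X P (fun x => dv3 f x * ((u1 - x) * (u1 - x))) xi u1 sc 1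
        (P_der f Hder u1) (fun x Hx => cont_d3w u1 x Hx) Hxi Hu1' ltac:(lra) ltac:(lra)).
    assert (HI2 := is_RInt_scal _ _ _ (/2) _ HI).
    assert (B2 : RInt g sc 1 <= / 2 * (P (X xi u1 1) - P (X xi u1 sc))).
    { apply Rle_trans with (RInt (fun s => / 2 * (dv3 f (X xi u1 s) * ((u1 - X xi u1 s) * (u1 - X xi u1 s)) * (2 * s * (u1 - xi)))) sc 1).
      - apply RInt_le. lra.
        apply exR; [apply cd3; auto|apply cont_w|..]; lra.
        eexists; exact HI2.
        intros s Hs. unfold g.
        assert (0 < X xi u1 s < 1) by (apply X_in; lra).
        assert (c <= X xi u1 s) by (rewrite <- HXsc; apply X_mono; lra).
        assert (Hd3 : dv3 f (X xi u1 s) < 0) by (apply Ha1; lra).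
        rewrite X_sq. fold lam.
        assert (Hw0 : 0 <= (1 - s * s) * (1 - s * s)) by (pose proof (Rle_0_sqr (1 - s * s)); unfold Rsqr in *; lra).
        assert (Hdw : dv3 f (X xi u1 s) * ((1 - s * s) * (1 - s * s)) <= 0).
        { rewrite <- (Rmult_0_l ((1 - s * s) * (1 - s * s))). apply Rmult_le_compat_r; lra. }
        assert (Ht : 0 <= s * (lam * lam * lam) <= 1).
        { assert (0 <= lam * lam * lam <= 1).
          { split. apply Rmult_le_pos; [apply Rmult_le_pos|]; lra.
            assert (lam * lam <= 1) by nra. nra. }
          split. apply Rmult_le_pos; lra. nra. }
        replace (/ 2 * (dv3 f (X xi u1 s) * ((lam * (1 - s * s)) * (lam * (1 - s * s))) * (2 * s * lam)))
          with ((dv3 f (X xi u1 s) * ((1 - s * s) * (1 - s * s))) * (s * (lam * lam * lam))) by field.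
        nra.
      - right. apply is_RInt_unique. exact HI2. }
    rewrite Hsplit.
    assert (HP1 : P (X xi u1 1) = 2 * f u1) by (rewrite X_1; unfold P; ring).
    assert (HPc : - Pc <= P (X xi u1 sc)).
    { rewrite HXsc. unfold P, Pc.
      assert (0 <= (u1 - c) * (u1 - c) <= 1) by (split; nra).
      pose proof (absb (dv2 f c) ((u1 - c) * (u1 - c)) H1).
      pose proof (absb (dv1 f c) (u1 - c) ltac:(lra)).
      pose proof (Rabs_pos (f c)). pose proof (Rle_abs (- f c)). rewrite Rabs_Ropp in H5.
      lra. }
    lra.
  - unfold F2. fold g.
    apply Rlt_le_trans with (RInt (fun _ => 0) 0 1).
    + apply RInt_lt. lra.
      intros; apply continuous_const.
      intros s Hs. apply (continuous_mult (K := R_AbsRing) (fun s => dv3 f (X xi u1 s)) (fun s => (1 - s * s) * (1 - s * s))).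
      apply cXc; auto. apply cd3; auto. apply cont_w.
      intros s Hs. unfold g.
      assert (0 < X xi u1 s < 1) by (apply X_in; lra).
      assert (c < X xi u1 s).
      { unfold X. assert (0 <= s * s <= 1) by nra.
        destruct (Rle_lt_dec xi u1); nra. }
      assert (Hd3 : dv3 f (X xi u1 s) < 0) by (apply Ha1; lra).
      assert (0 < 1 - s * s) by nra.
      assert (0 < (1 - s * s) * (1 - s * s)) by nra. nra.
    + rewrite RInt_const. change (scal (1 - 0) 0) with ((1 - 0) * 0). lra.
Qed.
End L6.

Lemma RInt_lb (g : R -> R) p q m : p <= q -> ex_RInt g p q ->
  (forall s, p < s < q -> m <= g s) -> (q - p) * m <= RInt g p q.
Proof.
  intros Hpq Hg Hm. replace ((q - p) * m) with (RInt (fun _ => m) p q).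
  apply RInt_le; auto. apply ex_RInt_const.
  rewrite RInt_const. reflexivity.
Qed.

Lemma RInt_ub (g : R -> R) p q m : p <= q -> ex_RInt g p q ->
  (forall s, p < s < q -> g s <= m) -> RInt g p q <= (q - p) * m.
Proof.
  intros Hpq Hg Hm. replace ((q - p) * m) with (RInt (fun _ => m) p q).
  apply RInt_le; auto. apply ex_RInt_const.
  rewrite RInt_const. reflexivity.
Qed.

Lemma RInt_le_sc (g h : R -> R) p q k I : p <= q -> ex_RInt g p q -> is_RInt h p q I ->
  (forall s, p < s < q -> g s <= k * h s) -> RInt g p q <= k * I.
Proof.
  intros Hpq Hg Hh Hs. assert (H2 := is_RInt_scal _ _ _ k _ Hh).
  replace (k * I) with (RInt (fun s => k * h s) p q).
  apply RInt_le; auto. eexists; exact H2.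
  apply is_RInt_unique. exact H2.
Qed.

Lemma RInt_ge_sc (g h : R -> R) p q k I : p <= q -> ex_RInt g p q -> is_RInt h p q I ->
  (forall s, p < s < q -> k * h s <= g s) -> k * I <= RInt g p q.
Proof.
  intros Hpq Hg Hh Hs. assert (H2 := is_RInt_scal _ _ _ k _ Hh).
  replace (k * I) with (RInt (fun s => k * h s) p q).
  apply RInt_le; auto. eexists; exact H2.
  apply is_RInt_unique. exact H2.
Qed.

Section Dec.
Variable f : R -> R.
Hypothesis Hder : forall (n : nat) (u : R), 0 < u < 1 -> ex_derive_n f n u.
Hypothesis Hneg : forall u, 0 < u < 1 -> Derive f u < 0.

Lemma cont_d2l u1 x : 0 < x < 1 -> continuous (fun x => dv2 f x * (u1 - x)) x.
Proof.
  intros Hx. apply (continuous_mult (K := R_AbsRing) (dv2 f) (fun x => u1 - x)).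
  apply (cd2 f Hder); auto. apply cont_lin1.
Qed.

Lemma decomp xi0 c u1 B1 B2 : 0 < xi0 < c -> c < u1 < 1 ->
  (forall x, c <= x < 1 -> dv2 f x <= 0) ->
  (forall x, xi0 <= x <= c -> - B1 <= dv1 f x) ->
  (forall x, xi0 <= x <= c -> - B2 <= dv2 f x <= B2) -> 0 <= B1 -> 0 <= B2 ->
  let lam := u1 - xi0 in let sc := sqrt ((c - xi0) / lam) in
  let D := f u1 - f c in let IQ := D - dv1 f c * (u1 - c) in
  0 < sc <= 1 /\ sc * sc = (c - xi0) / lam /\
  exists Ff Fn F1f F1n, FF f u1 xi0 = Ff + Fn /\ F1 f u1 xi0 = F1f + F1n /\
    - B1 <= Ff <= 0 /\ - B2 <= F1f <= B2 /\
    / (2 * sc * lam) * D <= Fn <= / (2 * lam) * D /\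
    / (2 * sc * lam * lam) * IQ <= F1n <= / (2 * lam * lam) * IQ.
Proof.
  intros Hx0 Hcu Hd2 HB1 HB2 HB1p HB2p lam sc D IQ.
  assert (Hlam : c - xi0 <= lam < 1) by (unfold lam; lra).
  assert (Hq : 0 < (c - xi0) / lam) by (apply Rdiv_lt_0_compat; lra).
  assert (Hsc0 : 0 < sc) by (apply sqrt_lt_R0; auto).
  assert (Hsc1 : sc <= 1).
  { unfold sc. rewrite <- sqrt_1. apply sqrt_le_1_alt.
    apply Rmult_le_reg_r with lam. lra. unfold Rdiv. rewrite Rmult_assoc, Rinv_l by lra. lra. }
  assert (Hss : sc * sc = (c - xi0) / lam) by (apply sqrt_sqrt; lra).
  split; [lra|]. split; [auto|].
  assert (Hxi : 0 < xi0 < 1) by lra. assert (Hu1 : 0 < u1 < 1) by lra.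
  assert (HXsc : X xi0 u1 sc = c) by (apply X_sc; lra).
  assert (HX0 : X xi0 u1 0 = xi0) by (unfold X; ring).
  assert (Hfar : forall s, 0 <= s <= sc -> xi0 <= X xi0 u1 s <= c).
  { intros s Hs. split. rewrite <- HX0 at 1. apply X_mono; lra. rewrite <- HXsc. apply X_mono; lra. }
  assert (Hnear : forall s, sc <= s <= 1 -> c <= X xi0 u1 s <= u1).
  { intros s Hs. split. rewrite <- HXsc. apply X_mono; lra. rewrite <- (X_1 xi0 u1) at 2. apply X_mono; lra. }
  set (g1 := fun s => dv1 f (X xi0 u1 s)).
  set (g2 := fun s => dv2 f (X xi0 u1 s) * (1 - s * s)).
  assert (E1 : forall p q, 0 <= p <= q -> q <= 1 -> ex_RInt g1 p q).
  { intros p q Hp Hq1. apply exR1; auto. apply cd1; auto. }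
  assert (E2 : forall p q, 0 <= p <= q -> q <= 1 -> ex_RInt g2 p q).
  { intros p q Hp Hq1. apply exR; auto. apply cd2; auto. apply cont_1mss. }
  exists (RInt g1 0 sc), (RInt g1 sc 1), (RInt g2 0 sc), (RInt g2 sc 1).
  split. { unfold FF. symmetry. apply (RInt_Chasles (V := R_CompleteNormedModule) g1); apply E1; lra. }
  split. { unfold F1. symmetry. apply (RInt_Chasles (V := R_CompleteNormedModule) g2); apply E2; lra. }
  split.
  { split.
    - apply Rle_trans with ((sc - 0) * (- B1)). nra.
      apply RInt_lb. lra. apply E1; lra. intros t Ht. unfold g1. apply HB1. apply Hfar. lra.
    - apply Rle_trans with ((sc - 0) * 0). 2: lra.
      apply RInt_ub. lra. apply E1; lra. intros t Ht. unfold g1.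
      pose proof (Hfar t ltac:(lra)). apply Rlt_le. apply Hneg. lra. }
  split.
  { assert (Hb : forall t, 0 < t < sc -> - B2 <= g2 t <= B2).
    { intros t Ht. unfold g2. pose proof (HB2 _ (Hfar t ltac:(lra))).
      assert (0 <= 1 - t * t <= 1) by nra. split; nra. }
    split.
    - apply Rle_trans with ((sc - 0) * (- B2)). nra.
      apply RInt_lb. lra. apply E2; lra. intros t Ht. apply Hb; auto.
    - apply Rle_trans with ((sc - 0) * B2). 2: nra.
      apply RInt_ub. lra. apply E2; lra. intros t Ht. apply Hb; auto. }
  assert (ID := ftc_X f (dv1 f) xi0 u1 sc 1 (dd0 f Hder) (cd1 f Hder) Hxi Hu1 ltac:(lra) ltac:(lra)).
  rewrite X_1, HXsc in ID. fold D in ID.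
  set (Q := fun x => dv1 f x * (u1 - x) + f x).
  assert (IQQ := ftc_X Q (fun x => dv2 f x * (u1 - x)) xi0 u1 sc 1 (Q_der f Hder u1) (cont_d2l u1) Hxi Hu1 ltac:(lra) ltac:(lra)).
  rewrite X_1, HXsc in IQQ.
  replace (Q u1 - Q c) with IQ in IQQ by (unfold Q, IQ, D; ring).
  assert (Hpt : forall t, sc < t < 1 -> 0 < X xi0 u1 t < 1 /\ dv1 f (X xi0 u1 t) < 0 /\ dv2 f (X xi0 u1 t) <= 0).
  { intros t Ht. pose proof (Hnear t ltac:(lra)).
    split. lra. split. apply Hneg; lra. apply Hd2; lra. }
  assert (Hl0 : 0 < lam) by lra.
  split. split.
  - eapply RInt_ge_sc; [lra | apply E1; lra | exact ID | ].
    intros t Ht. destruct (Hpt t Ht) as [_ [H1 _]]. unfold g1.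
    replace (/ (2 * sc * lam) * (dv1 f (X xi0 u1 t) * (2 * t * (u1 - xi0))))
      with (dv1 f (X xi0 u1 t) * t * / sc) by (unfold lam; field; lra).
    assert (dv1 f (X xi0 u1 t) * t <= dv1 f (X xi0 u1 t) * sc) by nra.
    apply Rle_trans with (dv1 f (X xi0 u1 t) * sc * / sc).
    apply Rmult_le_compat_r; auto. left; apply Rinv_0_lt_compat; lra.
    right; field; lra.
  - eapply RInt_le_sc; [lra | apply E1; lra | exact ID | ].
    intros t Ht. destruct (Hpt t Ht) as [_ [H1 _]]. unfold g1.
    replace (/ (2 * lam) * (dv1 f (X xi0 u1 t) * (2 * t * (u1 - xi0))))
      with (dv1 f (X xi0 u1 t) * t) by (unfold lam; field; lra).
    nra.
  - split.
    + eapply RInt_ge_sc; [lra | apply E2; lra | exact IQQ | ].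
      intros t Ht. destruct (Hpt t Ht) as [_ [_ H2]]. unfold g2. rewrite X_sq. fold lam.
      assert (Hy : dv2 f (X xi0 u1 t) * (1 - t * t) <= 0).
      { assert (0 <= 1 - t * t) by nra. rewrite <- (Rmult_0_l (1 - t * t)). apply Rmult_le_compat_r; lra. }
      replace (/ (2 * sc * lam * lam) * (dv2 f (X xi0 u1 t) * (lam * (1 - t * t)) * (2 * t * lam)))
        with ((dv2 f (X xi0 u1 t) * (1 - t * t)) * t * / sc) by (field; lra).
      assert (dv2 f (X xi0 u1 t) * (1 - t * t) * t <= dv2 f (X xi0 u1 t) * (1 - t * t) * sc) by nra.
      apply Rle_trans with (dv2 f (X xi0 u1 t) * (1 - t * t) * sc * / sc).
      apply Rmult_le_compat_r; auto. left; apply Rinv_0_lt_compat; lra.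
      right; field; lra.
    + eapply RInt_le_sc; [lra | apply E2; lra | exact IQQ | ].
      intros t Ht. destruct (Hpt t Ht) as [_ [_ H2]]. unfold g2. rewrite X_sq. fold lam.
      assert (Hy : dv2 f (X xi0 u1 t) * (1 - t * t) <= 0).
      { assert (0 <= 1 - t * t) by nra. rewrite <- (Rmult_0_l (1 - t * t)). apply Rmult_le_compat_r; lra. }
      replace (/ (2 * lam * lam) * (dv2 f (X xi0 u1 t) * (lam * (1 - t * t)) * (2 * t * lam)))
        with ((dv2 f (X xi0 u1 t) * (1 - t * t)) * t) by (field; lra).
      nra.
Qed.
End Dec.

Section L78.
Variable f : R -> R.
Hypothesis Hder : forall (n : nat) (u : R), 0 < u < 1 -> ex_derive_n f n u.
Hypothesis Hneg : forall u, 0 < u < 1 -> Derive f u < 0.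
Hypothesis Hlim : filterlim f (at_left 1) (Rbar_locally m_infty).
Variable a : R.
Hypothesis Ha : 0 < a.
Hypothesis Ha0 : forall u, 0 < u < a -> Derive_n f 3 u < 0.
Hypothesis Ha1 : forall u, 1 - a < u < 1 -> Derive_n f 3 u < 0.

Lemma bounds xi0 c : 0 < xi0 <= c -> c < 1 -> exists B1 B2, 0 <= B1 /\ 0 <= B2 /\
  (forall x, xi0 <= x <= c -> - B1 <= dv1 f x) /\
  (forall x, xi0 <= x <= c -> - B2 <= dv2 f x <= B2).
Proof.
  intros H1 H2.
  destruct (continuity_ab_maj (fun x => - dv1 f x) xi0 c) as [M1 [HM1 _]]. lra.
  { intros z Hz. apply continuity_pt_opp. apply continuity_pt_filterlim. apply (cd1 f Hder). lra. }
  destruct (continuity_ab_maj (dv2 f) xi0 c) as [M2 [HM2 _]]. lra.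
  { intros z Hz. apply continuity_pt_filterlim. apply (cd2 f Hder). lra. }
  destruct (continuity_ab_maj (fun x => - dv2 f x) xi0 c) as [M3 [HM3 _]]. lra.
  { intros z Hz. apply continuity_pt_opp. apply continuity_pt_filterlim. apply (cd2 f Hder). lra. }
  exists (Rmax 0 (- dv1 f M1)), (Rmax 0 (Rmax (dv2 f M2) (- dv2 f M3))).
  split. apply Rmax_l. split. apply Rmax_l. split.
  - intros x Hx. specialize (HM1 x Hx). simpl in HM1. pose proof (Rmax_r 0 (- dv1 f M1)). lra.
  - intros x Hx. specialize (HM2 x Hx). specialize (HM3 x Hx). simpl in *.
    pose proof (Rmax_r 0 (Rmax (dv2 f M2) (- dv2 f M3))).
    pose proof (Rmax_l (dv2 f M2) (- dv2 f M3)). pose proof (Rmax_r (dv2 f M2) (- dv2 f M3)). lra.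
Qed.

Lemma L7 xi0 : 0 < xi0 < 1/4 -> exists d, 0 < d /\ forall u1, 1 - d < u1 < 1 -> 0 < phi f u1 xi0.
Proof.
  intros Hx0.
  destruct (v_exists f Hder Hneg Hlim a Ha Ha1) as [v [Hv01 [Hva Hv]]].
  set (c := Rmax v ((2 * xi0 + 3/2) / 2)).
  assert (Hc : v <= c /\ (2 * xi0 + 3/2) / 2 <= c /\ c < 1).
  { unfold c. split. apply Rmax_l. split. apply Rmax_r. unfold Rmax. destruct (Rle_dec v _); lra. }
  destruct (bounds xi0 c ltac:(lra) ltac:(lra)) as [B1 [B2 [HB1p [HB2p [HB1 HB2]]]]].
  set (kap := 4/3 - (4 * xi0 + 2) / (3 * (c - xi0))).
  assert (Hkap : 0 < kap).
  { unfold kap. assert (0 < c - xi0) by lra.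
    assert ((4 * xi0 + 2) / (3 * (c - xi0)) < 4/3); [|lra].
    apply Rmult_lt_reg_r with (3 * (c - xi0)). lra.
    unfold Rdiv. rewrite Rmult_assoc, Rinv_l by lra. lra. }
  destruct (lim_f f Hlim (f c - (4 * B2 + 2) / kap)) as [d0 [Hd0 Hd0P]].
  exists (Rmin d0 (1 - c)). split. apply Rmin_pos; lra.
  intros u1 Hu1. pose proof (Rmin_l d0 (1 - c)). pose proof (Rmin_r d0 (1 - c)).
  assert (Hcu : c < u1 < 1) by lra.
  assert (Hfu : f u1 < f c - (4 * B2 + 2) / kap) by (apply Hd0P; lra).
  destruct (decomp f Hder Hneg xi0 c u1 B1 B2 ltac:(lra) Hcu
    (fun x Hx => Rlt_le _ _ (Hv x ltac:(lra))) HB1 HB2 HB1p HB2p)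
    as [Hsc [Hss [Ff [Fn [F1f [F1n [EF [EF1 [BFf [BF1f [BFn BF1n]]]]]]]]]]].
  set (lam := u1 - xi0) in *. set (sc := sqrt ((c - xi0) / lam)) in *.
  unfold phi. rewrite EF, EF1.
  set (N := f c - f u1).
  assert (HN : (4 * B2 + 2) < N * kap).
  { assert ((4 * B2 + 2) / kap < N) by (unfold N; lra).
    apply Rmult_lt_compat_r with (r := kap) in H1; auto.
    unfold Rdiv in H1. rewrite Rmult_assoc, Rinv_l in H1 by lra. lra. }
  assert (HU0 : 0 < U0 xi0 u1 <= (4 * xi0 + 2) / 3) by (unfold U0; lra).
  assert (Hlam : c - xi0 <= lam < 1) by (unfold lam; lra).
  assert (HT : c - xi0 <= sc * lam).
  { assert (Hq : (sc * lam) * (sc * lam) = (c - xi0) * lam).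
    { replace ((sc * lam) * (sc * lam)) with ((sc * sc) * lam * lam) by ring. rewrite Hss. field. lra. }
    assert (0 < sc * lam) by nra. nra. }
  assert (HdvC : dv1 f c < 0) by (apply Hneg; lra).
  assert (S1 : U0 xi0 u1 * (/ (2 * sc * lam * lam) * (- N)) <= U0 xi0 u1 * F1n).
  { apply Rmult_le_compat_l. lra.
    apply Rle_trans with (2 := proj1 BF1n). apply Rmult_le_compat_l.
    left. apply Rinv_0_lt_compat. assert (0 < sc * lam) by nra. nra.
    unfold N. assert (0 <= - dv1 f c * (u1 - c)) by nra. lra. }
  assert (S2 : U0 xi0 u1 * (/ (2 * sc * lam * lam) * (- N)) = - (N / (2 * lam)) * (U0 xi0 u1 / (sc * lam))).
  { field. lra. }
  assert (S3 : (N / (2 * lam)) * (4/3) <= - (4/3) * Fn).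
  { replace (N / (2 * lam) * (4/3)) with (- (4/3) * (/ (2 * lam) * (- N))) by (field; lra).
    apply Rmult_le_compat_neg_l. lra. unfold N. replace (- (f c - f u1)) with (f u1 - f c) by ring. apply BFn. }
  assert (S4 : - 2 * B2 <= F1f * U0 xi0 u1) by nra.
  assert (S6 : U0 xi0 u1 / (sc * lam) <= (4 * xi0 + 2) / (3 * (c - xi0))).
  { unfold Rdiv. apply Rle_trans with (U0 xi0 u1 * / (c - xi0)).
    apply Rmult_le_compat_l. lra. apply Rinv_le_contravar; lra.
    replace ((4 * xi0 + 2) * / (3 * (c - xi0))) with ((4 * xi0 + 2) / 3 * / (c - xi0)) by (field; lra).
    apply Rmult_le_compat_r. left; apply Rinv_0_lt_compat; lra. lra. }
  assert (HNp : 0 < N).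
  { destruct (Rle_lt_dec N 0) as [h|h]; [|exact h]. assert (0 <= - N * kap) by (apply Rmult_le_pos; lra). lra. }
  assert (S7 : N / 2 * kap <= (N / (2 * lam)) * (4/3 - U0 xi0 u1 / (sc * lam))).
  { apply Rle_trans with ((N / (2 * lam)) * kap).
    - apply Rmult_le_compat_r. lra. unfold Rdiv. apply Rmult_le_compat_l. lra.
      apply Rinv_le_contravar; lra.
    - apply Rmult_le_compat_l. apply Rdiv_le_0_compat; lra. unfold kap. lra. }
  nra.
Qed.

Lemma L8 xi0 : 1/4 < xi0 < 1/2 -> exists d, 0 < d /\ forall u1, 1 - d < u1 < 1 -> phi f u1 xi0 < 0.
Proof.
  intros Hx0.
  destruct (v_exists f Hder Hneg Hlim a Ha Ha1) as [v [Hv01 [Hva Hv]]].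
  set (t0 := (1 - xi0) * (8 * xi0 - 2) / 12).
  assert (Ht0 : 0 < t0 < 1 - xi0).
  { assert (0 < (1 - xi0) * (8 * xi0 - 2)) by (apply Rmult_lt_0_compat; lra).
    assert ((1 - xi0) * (8 * xi0 - 2) < (1 - xi0) * 12) by (apply Rmult_lt_compat_l; lra).
    unfold t0. lra. }
  set (c := Rmax v (1 - t0)).
  assert (Hc : v <= c /\ 1 - t0 <= c /\ c < 1).
  { unfold c. split. apply Rmax_l. split. apply Rmax_r. unfold Rmax. destruct (Rle_dec v _); lra. }
  assert (Hcx : xi0 < c) by lra.
  assert (Hpos : 4 * (1 - xi0) * (1 - xi0) < (4 * xi0 + 2 * c) * (c - xi0)).
  { set (t := 1 - c). assert (0 < t <= t0) by (unfold t; lra).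
    replace c with (1 - t) by (unfold t; ring).
    assert (t * (2 * xi0 + 4) <= 6 * t0).
    { apply Rle_trans with (t * 6). apply Rmult_le_compat_l; lra. lra. }
    assert (Hid : (4 * xi0 + 2 * (1 - t)) * (1 - t - xi0) - 4 * (1 - xi0) * (1 - xi0)
       = (1 - xi0) * (8 * xi0 - 2) - t * (2 * xi0 + 4) + 2 * (t * t)) by ring.
    pose proof (Rle_0_sqr t). unfold Rsqr in *. unfold t0 in *. lra. }
  destruct (bounds xi0 c ltac:(lra) ltac:(lra)) as [B1 [B2 [HB1p [HB2p [HB1 HB2]]]]].
  set (kap := (4 * xi0 + 2 * c) / (3 * (1 - xi0)) - 4 * (1 - xi0) / (3 * (c - xi0))).
  assert (Hkap : 0 < kap).
  { unfold kap. unfold Rdiv.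
    replace ((4 * xi0 + 2 * c) * / (3 * (1 - xi0)) - 4 * (1 - xi0) * / (3 * (c - xi0)))
      with (((4 * xi0 + 2 * c) * (c - xi0) - 4 * (1 - xi0) * (1 - xi0)) * / (3 * (1 - xi0) * (c - xi0)))
      by (field; lra).
    apply Rmult_lt_0_compat. lra. apply Rinv_0_lt_compat.
    apply Rmult_lt_0_compat; [apply Rmult_lt_0_compat|]; lra. }
  set (E := Rabs (dv1 f c) / ((c - xi0) * (c - xi0))).
  set (K0 := 2 * B2 + 4/3 * B1 + E).
  destruct (lim_f f Hlim (f c - 2 * (K0 + 1) / kap)) as [d0 [Hd0 Hd0P]].
  exists (Rmin d0 (1 - c)). split. apply Rmin_pos; lra.
  intros u1 Hu1. pose proof (Rmin_l d0 (1 - c)). pose proof (Rmin_r d0 (1 - c)).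
  assert (Hcu : c < u1 < 1) by lra.
  assert (Hfu : f u1 < f c - 2 * (K0 + 1) / kap) by (apply Hd0P; lra).
  destruct (decomp f Hder Hneg xi0 c u1 B1 B2 ltac:(lra) Hcu
    (fun x Hx => Rlt_le _ _ (Hv x ltac:(lra))) HB1 HB2 HB1p HB2p)
    as [Hsc [Hss [Ff [Fn [F1f [F1n [EF [EF1 [BFf [BF1f [BFn BF1n]]]]]]]]]]].
  set (lam := u1 - xi0) in *. set (sc := sqrt ((c - xi0) / lam)) in *.
  unfold phi. rewrite EF, EF1.
  set (N := f c - f u1).
  assert (HN : 2 * (K0 + 1) < N * kap).
  { assert (2 * (K0 + 1) / kap < N) by (unfold N; lra).
    apply Rmult_lt_compat_r with (r := kap) in H1; auto.
    unfold Rdiv in H1. rewrite Rmult_assoc, Rinv_l in H1 by lra. lra. }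
  assert (HK0 : 0 <= K0).
  { unfold K0, E. assert (0 <= Rabs (dv1 f c) / ((c - xi0) * (c - xi0))).
    apply Rdiv_le_0_compat. apply Rabs_pos. apply Rmult_lt_0_compat; lra. lra. }
  assert (HNp : 0 < N).
  { destruct (Rle_lt_dec N 0) as [h|h]; [|exact h]. assert (0 <= - N * kap) by (apply Rmult_le_pos; lra). lra. }
  assert (HU0 : (4 * xi0 + 2 * c) / 3 <= U0 xi0 u1 <= 2) by (unfold U0; lra).
  assert (Hlam : c - xi0 <= lam <= 1 - xi0) by (unfold lam; lra).
  assert (Hscr : (c - xi0) / (1 - xi0) <= sc).
  { set (r := (c - xi0) / (1 - xi0)).
    assert (Hr : 0 < r <= 1).
    { unfold r. split. apply Rdiv_lt_0_compat; lra.
      apply Rmult_le_reg_r with (1 - xi0). lra. unfold Rdiv. rewrite Rmult_assoc, Rinv_l by lra. lra. }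
    assert (r <= sc * sc).
    { rewrite Hss. unfold r. unfold Rdiv. apply Rmult_le_compat_l. lra.
      apply Rinv_le_contravar; lra. }
    destruct (Rle_lt_dec r sc) as [h|h]; auto.
    assert (sc * sc <= sc * r) by (apply Rmult_le_compat_l; lra).
    assert (sc * r < r * r) by (apply Rmult_lt_compat_r; lra).
    assert (r * r <= r * 1) by (apply Rmult_le_compat_l; lra). lra. }
  assert (HdvC : dv1 f c < 0) by (apply Hneg; lra).
  assert (S1 : U0 xi0 u1 * F1n <= - (N / (2 * lam)) * (U0 xi0 u1 / lam) + E).
  { apply Rle_trans with (U0 xi0 u1 * (/ (2 * lam * lam) * (f u1 - f c - dv1 f c * (u1 - c)))).
    apply Rmult_le_compat_l. lra. apply BF1n.
    replace (U0 xi0 u1 * (/ (2 * lam * lam) * (f u1 - f c - dv1 f c * (u1 - c))))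
      with (- (N / (2 * lam)) * (U0 xi0 u1 / lam) + (U0 xi0 u1 / 2) * (- dv1 f c * (u1 - c)) * / (lam * lam))
      by (unfold N; field; lra).
    apply Rplus_le_compat_l. unfold E. rewrite Rabs_left by lra.
    apply Rle_trans with ((- dv1 f c) * / (lam * lam)).
    - apply Rmult_le_compat_r. left; apply Rinv_0_lt_compat; apply Rmult_lt_0_compat; lra.
      assert (0 <= - dv1 f c * (u1 - c)) by (apply Rmult_le_pos; lra).
      assert (- dv1 f c * (u1 - c) <= - dv1 f c * 1) by (apply Rmult_le_compat_l; lra).
      apply Rle_trans with (1 * (- dv1 f c * (u1 - c))).
      apply Rmult_le_compat_r; lra. lra.
    - unfold Rdiv. apply Rmult_le_compat_l. lra. apply Rinv_le_contravar.
      apply Rmult_lt_0_compat; lra. apply Rmult_le_compat; lra. }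
  assert (S3 : - (4/3) * Fn <= (N / (2 * lam)) * (4 / (3 * sc))).
  { replace (N / (2 * lam) * (4 / (3 * sc))) with (- (4/3) * (/ (2 * sc * lam) * (- N))) by (field; lra).
    apply Rmult_le_compat_neg_l. lra. unfold N. replace (- (f c - f u1)) with (f u1 - f c) by ring. apply BFn. }
  assert (S4 : F1f * U0 xi0 u1 <= 2 * B2).
  { apply Rle_trans with (B2 * U0 xi0 u1). apply Rmult_le_compat_r; lra.
    apply Rle_trans with (B2 * 2). apply Rmult_le_compat_l; lra. lra. }
  assert (S5 : - (4/3) * Ff <= 4/3 * B1) by lra.
  assert (S6 : 4 / (3 * sc) - U0 xi0 u1 / lam <= - kap).
  { unfold kap.
    assert (4 / (3 * sc) <= 4 * (1 - xi0) / (3 * (c - xi0))).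
    { replace (4 * (1 - xi0) / (3 * (c - xi0))) with (4 / (3 * ((c - xi0) / (1 - xi0)))) by (field; lra).
      unfold Rdiv at 1 2. apply Rmult_le_compat_l. lra. apply Rinv_le_contravar.
      apply Rmult_lt_0_compat. lra. apply Rdiv_lt_0_compat; lra. lra. }
    assert ((4 * xi0 + 2 * c) / (3 * (1 - xi0)) <= U0 xi0 u1 / lam).
    { apply Rle_trans with (U0 xi0 u1 / (1 - xi0)).
      replace ((4 * xi0 + 2 * c) / (3 * (1 - xi0))) with ((4 * xi0 + 2 * c) / 3 / (1 - xi0)) by (field; lra).
      unfold Rdiv. apply Rmult_le_compat_r. left; apply Rinv_0_lt_compat; lra. lra.
      unfold Rdiv. apply Rmult_le_compat_l. lra. apply Rinv_le_contravar; lra. }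
    lra. }
  assert (S7 : (N / (2 * lam)) * (4 / (3 * sc) - U0 xi0 u1 / lam) <= - (N / 2 * kap)).
  { apply Rle_trans with ((N / (2 * lam)) * (- kap)).
    apply Rmult_le_compat_l. apply Rdiv_le_0_compat; lra. auto.
    assert (N / 2 * kap <= N / (2 * lam) * kap); [|lra].
    apply Rmult_le_compat_r. lra. unfold Rdiv. apply Rmult_le_compat_l. lra.
    apply Rinv_le_contravar; lra. }
  assert (HE : (F1f + F1n) * U0 xi0 u1 - 4 / 3 * (Ff + Fn) =
     F1f * U0 xi0 u1 + U0 xi0 u1 * F1n + (- (4/3) * Ff) + (- (4/3) * Fn)) by ring.
  assert (HE2 : - (N / (2 * lam)) * (U0 xi0 u1 / lam) + (N / (2 * lam)) * (4 / (3 * sc)) =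
     (N / (2 * lam)) * (4 / (3 * sc) - U0 xi0 u1 / lam)) by ring.
  assert (HE3 : N / 2 * kap = / 2 * (N * kap)) by field.
  rewrite HE. unfold K0 in HN. lra.
Qed.
End L78.

Lemma phi_decr f (Hder : forall (n : nat) (u : R), 0 < u < 1 -> ex_derive_n f n u) u1 :
  0 < u1 < 1 -> (forall xi, 0 < xi < 1 -> F2 f u1 xi < 0) ->
  forall x y, 0 < x -> x < y -> y < 1 -> phi f u1 y < phi f u1 x.
Proof.
  intros Hu1 HF2 x y Hx Hxy Hy.
  apply (mono_lt (phi f u1) (fun z => F2 f u1 z * U0 z u1)). lra.
  intros z Hz. apply phi_der; auto. lra.
  intros z Hz. assert (F2 f u1 z < 0) by (apply HF2; lra).
  assert (0 < U0 z u1) by (apply U0_pos; lra). nra.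
Qed.

Theorem lemma4p3 (f : R -> R) (Hf : standing_assumptions f) :
  (exists delta, 0 < delta /\
     forall u1, 1 - delta < u1 < 1 ->
       exists! xi, critical_point f u1 xi) /\
  (forall eps, 0 < eps -> exists delta, 0 < delta /\
     forall u1 xi, 1 - delta < u1 < 1 -> critical_point f u1 xi ->
       Rabs (xi - 1 / 4) < eps).
Proof.
  destruct Hf as [Hder [Hneg [_ [Hlim [a [Ha [Ha0 Ha1]]]]]]].
  destruct (L6 f Hder Hlim a Ha Ha0 Ha1) as [d6 [Hd6 H6]].
  split.
  - destruct (L7 f Hder Hneg Hlim a Ha Ha1 (1/8) ltac:(lra)) as [d7 [Hd7 H7]].
    destruct (L8 f Hder Hneg Hlim a Ha Ha1 (3/8) ltac:(lra)) as [d8 [Hd8 H8]].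
    exists (Rmin (Rmin d6 d7) (Rmin d8 (1/2))). split.
    { repeat apply Rmin_pos; lra. }
    intros u1 Hu1.
    pose proof (Rmin_l (Rmin d6 d7) (Rmin d8 (1/2))). pose proof (Rmin_r (Rmin d6 d7) (Rmin d8 (1/2))).
    pose proof (Rmin_l d6 d7). pose proof (Rmin_r d6 d7). pose proof (Rmin_l d8 (1/2)). pose proof (Rmin_r d8 (1/2)).
    assert (Hu1' : 0 < u1 < 1) by lra.
    assert (HF2 : forall xi, 0 < xi < 1 -> F2 f u1 xi < 0) by (apply H6; lra).
    specialize (H7 u1 ltac:(lra)). specialize (H8 u1 ltac:(lra)).
    destruct (Ranalysis5.IVT_interv (fun x => - phi f u1 x) (1/8) (3/8)) as [z [Hz Hz0]].
    + intros x Hx. apply continuity_pt_opp. apply continuity_pt_filterlim.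
      apply (ex_derive_continuous (K:=R_AbsRing) (V:=R_NormedModule)).
      eexists. apply phi_der; auto. lra.
    + lra.
    + lra.
    + lra.
    + exists z. split.
      * apply crit_iff; auto. split. lra. lra.
      * intros y Hy. apply crit_iff in Hy; auto. destruct Hy as [Hy Hy0].
        destruct (Rtotal_order z y) as [Hlt|[Heq|Hgt]]; auto.
        -- pose proof (phi_decr f Hder u1 Hu1' HF2 z y ltac:(lra) Hlt ltac:(lra)). lra.
        -- pose proof (phi_decr f Hder u1 Hu1' HF2 y z ltac:(lra) Hgt ltac:(lra)). lra.
  - intros eps Heps.
    set (xm := Rmax (1/8) (1/4 - eps / 2)). set (xp := Rmin (3/8) (1/4 + eps / 2)).
    assert (Hxm : 0 < xm < 1/4 /\ 1/4 - eps/2 <= xm).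
    { unfold xm, Rmax. destruct (Rle_dec (1/8) (1/4 - eps/2)); lra. }
    assert (Hxp : 1/4 < xp < 1/2 /\ xp <= 1/4 + eps/2).
    { unfold xp, Rmin. destruct (Rle_dec (3/8) (1/4 + eps/2)); lra. }
    destruct (L7 f Hder Hneg Hlim a Ha Ha1 xm ltac:(lra)) as [d7 [Hd7 H7]].
    destruct (L8 f Hder Hneg Hlim a Ha Ha1 xp ltac:(lra)) as [d8 [Hd8 H8]].
    exists (Rmin (Rmin d6 d7) (Rmin d8 (1/2))). split.
    { repeat apply Rmin_pos; lra. }
    intros u1 xi Hu1 Hc.
    pose proof (Rmin_l (Rmin d6 d7) (Rmin d8 (1/2))). pose proof (Rmin_r (Rmin d6 d7) (Rmin d8 (1/2))).
    pose proof (Rmin_l d6 d7). pose proof (Rmin_r d6 d7). pose proof (Rmin_l d8 (1/2)). pose proof (Rmin_r d8 (1/2)).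
    assert (Hu1' : 0 < u1 < 1) by lra.
    assert (HF2 : forall xi, 0 < xi < 1 -> F2 f u1 xi < 0) by (apply H6; lra).
    specialize (H7 u1 ltac:(lra)). specialize (H8 u1 ltac:(lra)).
    apply crit_iff in Hc; auto. destruct Hc as [Hx Hx0].
    assert (xm < xi).
    { destruct (Rtotal_order xm xi) as [h|[h|h]]; auto.
      - subst. lra.
      - pose proof (phi_decr f Hder u1 Hu1' HF2 xi xm ltac:(lra) h ltac:(lra)). lra. }
    assert (xi < xp).
    { destruct (Rtotal_order xi xp) as [h|[h|h]]; auto.
      - subst. lra.
      - pose proof (phi_decr f Hder u1 Hu1' HF2 xp xi ltac:(lra) h ltac:(lra)). lra. }
    apply Rabs_def1; lra.
Qed.
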